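(* Let $\phi:\mathbb{N}_0\to\mathbb{N}_0$ satisfy $\phi(0)=0$ and $\phi(x)\neq x$ for all $x\in\mathbb{N}$, and let $n\ge2$. Assume the local function $\phi_n$ has no cycle. Let $p_\nu=|\{x\in D_n: h(x)=\nu\}|$ for $1\le\nu\le n$, let $m=\max\{\nu\in\{1,\dots,n\}: p_\nu\ge1\}$, and $\pi=(p_1,\dots,p_m)$. Then $\pi$ is an ordered partition (composition) of $n$ of length $m$, $1\le m\le n$, with $p_1,\dots,p_m\ge1$. Moreover: (1) $M_n(\phi)$ is nilpotent of degree $m$. (2) For $1\le k\le m$, \[ M_n(\phi)^k=\sum_{x\in D_n:\ \phi_n^k(x)\in D_n} E_n(\phi_n^k(x),x),\qquad \#M_n(\phi)^k=n-\sum_{\nu=1}^k p_\nu. \] (3) Writing $\widehat{M}_n(\phi)^{-1}=(\mathbf{v}_1,\dots,\mathbf{v}_n)$ by columns, we have $\mathbf{v}_j=\mathbf{e}_j+\sum_{\nu=1}^{h(j)-1}\mathbf{e}_{\phi_n^\nu(j)}$ for $1\le j\le n$, and \[ \#\widehat{M}_n(\phi)^{-1}=\sum_{x\in D_n}h(x)=\sum_{\nu=1}^m\nu p_\nu\le nm-\binom{m}{2}. \]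
   Context: $\mathbb{N}=\{1,2,\dots\}$, $\mathbb{N}_0=\mathbb{N}\cup\{0\}$, $D_n=\{1,\dots,n\}$, $D_{n,0}=D_n\cup\{0\}$. The local function $\phi_n:D_{n,0}\to D_{n,0}$ is $\phi_n(x)=\phi(x)$ if $x\in D_n$ and $\phi(x)\in D_n$, and $\phi_n(x)=0$ otherwise. ''$\phi_n$ has no cycle'' means there are no $m\ge2$ and $x\in D_n$ with $\phi_n^m(x)=x$. The height of $x\in D_n$ is $h(x)=\min\{k\in\mathbb{N}:\phi_n^k(x)=0\}$. For $1\le i\le n$, $\mathbf{e}_i$ is the $i$-th unit vector in $\mathbb{Z}^n$ and $\mathbf{e}_0$ the zero vector; $E_n(i,j)=\mathbf{e}_i\mathbf{e}_j^t$. $M_n(\phi)$ is the $n\times n$ matrix whose $j$-th column is $\mathbf{e}_{\phi_n(j)}$, and $\widehat{M}_n(\phi)=I-M_n(\phi)$. $\#A$ denotes the number of nonzero entries of a matrix $A$. A matrix $A$ is nilpotent of degree $k$ if $A^k=0$ and $A^{k-1}\ne0$. *)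

(* Defs.v *)
From HB Require Import structures.
From mathcomp Require Import all_boot all_order all_algebra.
Set Implicit Arguments. Unset Strict Implicit. Unset Printing Implicit Defensive.
Import GRing.Theory Num.Theory.
Local Open Scope ring_scope.

(* Indices: the paper's D_n = {1,...,n}; matrix index i : 'I_n corresponds to i.+1. *)

Definition phin (n : nat) (phi : nat -> nat) (x : nat) : nat :=
  if ((1 <= x <= n) && (1 <= phi x <= n))%N then phi x else 0%N.

(* height h(x) = min {k >= 1 : phi_n^k x = 0}, searched in 1..n
   (under the no-cycle hypothesis the height of every x in D_n is <= n;
    the value n.+1 is returned if no such k <= n exists) *)
Definition height (n : nat) (phi : nat -> nat) (x : nat) : nat :=
  (find (fun k => iter k (phin n phi) x == 0%N) (iota 1 n)).+1.

Definition no_cycle (n : nat) (phi : nat -> nat) : Prop :=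
  ~ (exists (k x : nat), (2 <= k)%N /\ (1 <= x <= n)%N /\ iter k (phin n phi) x = x).

(* unit vector e_i in Z^n (e_0 = 0 and e_i = 0 for i > n) *)
Definition evec (n i : nat) : 'cV[int]_n := \col_(r < n) ((r.+1 == i)%:R).

Definition Emat (n i j : nat) : 'M[int]_n := evec n i *m (evec n j)^T.

Definition Mphi (n : nat) (phi : nat -> nat) : 'M[int]_n :=
  \matrix_(i < n, j < n) ((i.+1 == phin n phi j.+1)%:R).

Definition Mhat (n : nat) (phi : nat -> nat) : 'M[int]_n := 1%:M - Mphi n phi.

Definition nnz (n : nat) (A : 'M[int]_n) : nat :=
  #|[set ij : 'I_n * 'I_n | A ij.1 ij.2 != 0]|.

Definition nilpotent_deg (n : nat) (A : 'M[int]_n) (k : nat) : Prop :=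
  A ^+ k = 0 /\ A ^+ k.-1 != 0.

Definition pcount (n : nat) (phi : nat -> nat) (nu : nat) : nat :=
  #|[set x : 'I_n | height n phi x.+1 == nu]|.

Definition mmax (n : nat) (phi : nat -> nat) : nat :=
  (\max_(1 <= nu < n.+1 | (0 < pcount n phi nu)%N) nu)%N.

(* Main.v *)
Require Import Defs.
From mathcomp Require Import all_boot all_order all_algebra.
From mathcomp Require Import zify.
Import GRing.Theory Num.Theory.
Local Open Scope ring_scope.

Lemma count_eq n' c : (\sum_(i < n') (i.+1 == c) = (1 <= c <= n'))%N.
Proof.
elim: n' => [|n' IH]; first by rewrite big_ord0; case: c.
rewrite big_ord_recr /= IH; lia.
Qed.

Lemma sum_ind a b c (g : nat -> nat) :
  (\sum_(a <= nu < b) (c == nu) * g nu = (a <= c < b) * g c)%N.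
Proof.
elim: b => [|b IH]; first by rewrite big_geq // ltn0 andbF.
case: (leqP a b) => ab; last first.
  rewrite big_geq //; case: (leqP a c) => //= ac; rewrite ltnS leqNgt.
  by rewrite (leq_trans ab ac).
rewrite big_nat_recr //= IH; case: eqP => [->|ne]; first by rewrite ltnn ab leqnn /=.
rewrite mul0n addn0 ltnS (leq_eqVlt c b); case: (c =P b) => [e|//]; by case: (ne e).
Qed.


Lemma sum_mem n' (s : seq nat) : uniq s -> all (fun c => 1 <= c <= n')%N s ->
  (\sum_(i < n') (i.+1 \in s) = size s)%N.
Proof.
elim: s => [|c s IH] /=; first by move=> _ _; rewrite big1.
move=> /andP[cs us] /andP[cr sr].
transitivity (\sum_(i < n') (i.+1 == c) + \sum_(i < n') (i.+1 \in s))%N; last first.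
  by rewrite count_eq cr IH.
rewrite -big_split; apply: eq_bigr => i _; rewrite in_cons; case: eqP => [e|] //=.
by rewrite e (negbTE cs).
Qed.

Lemma sum_count_mem (c : nat) (g : nat -> nat) r :
  (\sum_(k <- r) (c == g k))%N = count_mem c (map g r).
Proof. by elim: r => [|a r IH]; rewrite ?big_nil ?big_cons //= IH eq_sym. Qed.

Section S.
Variables (phi : nat -> nat) (n : nat).
Hypothesis phi_nofix : forall x : nat, (0 < x)%N -> phi x <> x.
Hypothesis hn : (2 <= n)%N.
Hypothesis hnc : no_cycle n phi.
Local Notation f := (phin n phi).
Local Notation h := (height n phi).

Lemma fle x : (f x <= n)%N.
Proof. rewrite /phin; case: ifP => //; by case/andP=> _ /andP[]. Qed.

Lemma f0 : f 0 = 0%N.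
Proof. by rewrite /phin. Qed.

Lemma iter0 k : iter k f 0 = 0%N.
Proof. by elim: k => //= k ->; rewrite f0. Qed.

Lemma iterle k x : (x <= n)%N -> (iter k f x <= n)%N.
Proof. by case: k => //= k _; apply: fle. Qed.

Lemma norep x a b : (1 <= x <= n)%N -> (a < b)%N -> iter a f x = iter b f x -> iter a f x = 0%N.
Proof.
move=> /andP[x1 xn] ab E.
set y := iter a f x in E *.
have Ey : iter (b - a) f y = y.
  by rewrite {2}E /y -iterD subnK // ltnW.
apply/eqP; apply/negPn/negP => y0.
have yn : (y <= n)%N by apply: iterle.
have [ba1|ba2] := eqVneq (b - a)%N 1%N.
  rewrite ba1 /= in Ey.
  move: Ey; rewrite /phin; case: ifP => _ Ey; last by rewrite -Ey eqxx in y0.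
  by apply: (phi_nofix y) => //; rewrite lt0n.
apply: hnc; exists (b - a)%N, y; split; last split => //.
  by move: ba2 ab; rewrite -subn_gt0; case: (b - a)%N => [|[]].
by rewrite yn andbT lt0n.
Qed.

Lemma hspec x : (1 <= x <= n)%N ->
  (forall k, (iter k f x != 0%N) = (k < h x)%N) /\ (h x <= n)%N.
Proof.
move=> x1xn; have /andP[x1 xn] := x1xn.
set a := fun k => iter k f x == 0%N.
have Ha : has a (iota 1 n).
  apply/negPn/negP => /hasPn H.
  have nz k : (k <= n)%N -> iter k f x != 0%N.
    case: k => [_|k kn]; first by rewrite /= -lt0n.
    by apply: H; rewrite mem_iota /= add1n ltnS.
  have lt k : ((iter k f x).-1 < n)%N.
    have := iterle k x xn; move: hn; lia.
  have inj : injective (fun k : 'I_n.+1 => Ordinal (lt k)).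
    move=> i j [] E.
    have Ei : iter i f x = iter j f x.
      have := nz _ (ltn_ord i : (i <= n)%N); have := nz _ (ltn_ord j : (j <= n)%N).
      by move: E; case: (iter i f x) => // ?; case: (iter j f x) => // ? /= -> .
    apply/val_inj => /=.
    case: (ltngtP i j) => // ij.
      by move: (norep _ _ _ x1xn ij Ei) (nz _ (ltn_ord i : (i <= n)%N)) => ->.
    by move: (norep _ _ _ x1xn ij (esym Ei)) (nz _ (ltn_ord j : (j <= n)%N)) => ->.
  by have := leq_card _ inj; rewrite !card_ord ltnn.
have il : (find a (iota 1 n) < n)%N by rewrite -[X in (_ < X)%N](size_iota 1 n) -has_find.
rewrite /height -/a; split; last by [].
case=> [|k]; first by rewrite /= -lt0n x1.
rewrite ltnS; case: (ltnP k (find a (iota 1 n))) => ki.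
  have := before_find 0 ki; rewrite nth_iota ?(ltn_trans ki il) // add1n /a => /negbT.
  by move=> ->.
have := nth_find 0 Ha; rewrite nth_iota // add1n /a => /eqP Hi.
have -> : iter k.+1 f x = 0%N by rewrite -(subnK ki) -addnS iterD Hi iter0.
by rewrite eqxx.
Qed.

Lemma Dn (x : 'I_n) : (1 <= x.+1 <= n)%N.
Proof. exact: ltn_ord x. Qed.

Lemma iter_nz x k : (1 <= x <= n)%N -> (1 <= iter k f x <= n)%N = (k < h x)%N.
Proof.
move=> Hx; have [H _] := hspec _ Hx; rewrite -H lt0n.
by case/andP: Hx => _ xn; rewrite iterle // andbT.
Qed.

Lemma iter_ge x k : (1 <= x <= n)%N -> (h x <= k)%N -> iter k f x = 0%N.
Proof.
move=> Hx hk; have [H _] := hspec _ Hx.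
by apply/eqP; apply/negPn; rewrite H -leqNgt.
Qed.

Lemma hle x : (1 <= x <= n)%N -> (1 <= h x <= n)%N.
Proof. by move=> Hx; have [_ H] := hspec _ Hx; rewrite H andbT /height. Qed.

Lemma eq_ltn a b : (forall k, (k < a)%N = (k < b)%N) -> a = b.
Proof.
move=> H; apply/eqP; rewrite eqn_leq.
by rewrite leqNgt (H b) ltnn /= leqNgt -(H a) ltnn.
Qed.

Lemma hf x : (1 <= x <= n)%N -> f x != 0%N -> h (f x) = (h x).-1 /\ (1 < h x)%N.
Proof.
move=> Hx fx; have [H _] := hspec _ Hx.
have Hf : (1 <= f x <= n)%N by rewrite lt0n fx fle.
have [H' _] := hspec _ Hf.
split; last by rewrite -H.
apply: eq_ltn => k; rewrite -H' -iterSr H; lia.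
Qed.


Definition hm := (\max_(x < n) h x.+1)%N.

Lemma hm_ge (x : 'I_n) : (h x.+1 <= hm)%N.
Proof. exact: leq_bigmax. Qed.

Lemma hm_ex : exists x : 'I_n, h x.+1 = hm.
Proof.
have c : (0 < #|'I_n|)%N by rewrite card_ord; case: n hn.
by case: (eq_bigmax (fun x : 'I_n => h x.+1) c) => x E; exists x; rewrite /hm E.
Qed.

Lemma hm_bounds : (1 <= hm <= n)%N.
Proof.
case: hm_ex => x <-; exact: hle _ (Dn x).
Qed.

Lemma pos nu : (1 <= nu <= hm)%N -> exists x : 'I_n, h x.+1 = nu.
Proof.
move=> /andP[n1 nm].
suff H : forall d, (d < hm)%N -> exists x : 'I_n, h x.+1 = (hm - d)%N.
  have := H (hm - nu)%N; rewrite subKn //; apply; lia.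
elim=> [|d IH] dm; first by rewrite subn0; exact: hm_ex.
case: (IH (ltnW dm)) => x hx.
have fx : f x.+1 != 0%N.
  have [H _] := hspec _ (Dn x); rewrite (H 1%N) hx; lia.
have [hfx _] := hf _ (Dn x) fx.
have lt : ((f x.+1).-1 < n)%N by have := fle x.+1; move: fx; lia.
exists (Ordinal lt) => /=.
have -> : (f x.+1).-1.+1 = f x.+1 by move: fx; lia.
rewrite hfx hx; lia.
Qed.

Lemma pcount_gt0 nu : (0 < pcount n phi nu)%N = [exists x : 'I_n, h x.+1 == nu].
Proof.
apply/card_gt0P/existsP => [][x]; rewrite ?inE => H; exists x; by rewrite ?inE.
Qed.

Lemma mmax_eq : mmax n phi = hm.
Proof.
apply/eqP; rewrite eqn_leq; apply/andP; split.
  rewrite /mmax; apply: (big_ind (fun v => v <= hm)%N) => //.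
    by move=> u v uh vh; rewrite geq_max uh vh.
  move=> nu; rewrite pcount_gt0 => /existsP[x /eqP <-]; exact: hm_ge.
rewrite /mmax; apply: (leq_bigmax_seq (F := id)).
  by rewrite mem_index_iota ltnS hm_bounds.
have /pos [x hx] : (1 <= hm <= hm)%N by case/andP: hm_bounds => -> _; rewrite leqnn.
rewrite pcount_gt0; apply/existsP; exists x; by rewrite hx.
Qed.

Lemma pcount_sum nu : pcount n phi nu = (\sum_(x < n) (h x.+1 == nu))%N.
Proof.
rewrite /pcount -sum1_card big_mkcond /=; apply: eq_bigr => x _; rewrite inE.
by case: eqP.
Qed.

Lemma sum_weighted (g : nat -> nat) k :
  (\sum_(1 <= nu < k.+1) g nu * pcount n phi nu =
   \sum_(x < n) (1 <= h x.+1 < k.+1) * g (h x.+1))%N.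
Proof.
under eq_bigr => nu _ do rewrite pcount_sum big_distrr.
rewrite exchange_big /=; apply: eq_bigr => x _.
rewrite -(sum_ind 1 k.+1 (h x.+1) g); apply: eq_bigr => nu _; by rewrite mulnC.
Qed.

Lemma comp_sum : (\sum_(1 <= nu < hm.+1) pcount n phi nu)%N = n.
Proof.
rewrite (eq_bigr (fun nu => 1 * pcount n phi nu)%N); last by move=> *; rewrite mul1n.
rewrite sum_weighted -[RHS]card_ord -sum1_card; apply: eq_bigr => x _.
by rewrite ltnS hm_ge andbT /height.
Qed.

Lemma hsum : (\sum_(x < n) h x.+1 = \sum_(1 <= nu < hm.+1) nu * pcount n phi nu)%N.
Proof.
rewrite (sum_weighted id); apply: eq_bigr => x _.
have -> : (0 < h x.+1 < hm.+1)%N = true by rewrite ltnS hm_ge andbT /height.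
by rewrite mul1n.
Qed.

Lemma tri m : (\sum_(1 <= nu < m.+1) (m - nu) = 'C(m, 2))%N.
Proof.
elim: m => [|m IH]; first by rewrite big_geq // bin0n.
rewrite big_nat_recl // (eq_bigr (fun nu => m - nu)%N) ?IH; last by move=> i _; rewrite subSS.
by rewrite binS bin1 subSS subn0 addnC.
Qed.

Lemma ineq : (\sum_(1 <= nu < hm.+1) nu * pcount n phi nu <= n * hm - 'C(hm, 2))%N.
Proof.
set S1 := (\sum_(1 <= nu < hm.+1) nu * pcount n phi nu)%N.
set S2 := (\sum_(1 <= nu < hm.+1) (hm - nu) * pcount n phi nu)%N.
have E : (S1 + S2 = n * hm)%N.
  transitivity (hm * \sum_(1 <= nu < hm.+1) pcount n phi nu)%N; last by rewrite comp_sum mulnC.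
  rewrite /S1 /S2 -big_split /= big_distrr /=.
  rewrite big_nat_cond [RHS]big_nat_cond; apply: eq_bigr => nu /andP[/andP[_ nh] _].
  by rewrite -mulnDl subnKC // -ltnS.
have C : ('C(hm, 2) <= S2)%N.
  rewrite -tri /S2 big_nat_cond [X in (_ <= X)%N]big_nat_cond; apply: leq_sum => nu /andP[nr _].
  case: (@pos nu _) => [|x hx]; first by move: nr; rewrite ltnS.
  apply: leq_pmulr; rewrite pcount_gt0; apply/existsP; exists x; by rewrite hx.
lia.
Qed.

Local Notation M := (Mphi n phi).

Lemma evec0 : evec n 0 = 0.
Proof. by apply/matrixP => i j; rewrite !mxE. Qed.

Lemma evec_entry c (i : 'I_n) (j : 'I_1) : evec n c i j = (i.+1 == c)%:R.
Proof. by rewrite mxE. Qed.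

Lemma sum_ind_int c : \sum_(i < n) ((i.+1 == c)%:R : int) = (1 <= c <= n)%N%:R.
Proof. by rewrite -natr_sum count_eq. Qed.

Lemma Mevec j : M *m evec n j = evec n (f j).
Proof.
apply/matrixP => i k; rewrite !mxE.
transitivity (\sum_(r < n) ((r.+1 == j)%:R * (i.+1 == f j)%:R : int)).
  apply: eq_bigr => r _; rewrite !mxE; case: (r.+1 =P j) => [<-|_]; first by rewrite mulrC.
  by rewrite !mulr0 mul0r.
rewrite -big_distrl /= sum_ind_int.
case Hj: (1 <= j <= n)%N; first by rewrite mul1r.
by rewrite mul0r /phin Hj.
Qed.

Lemma Mpow_evec k j : M ^+ k *m evec n j = evec n (iter k f j).
Proof.
elim: k => [|k IH]; first by rewrite expr0 mul1mx.
by rewrite exprS -mulmxE -mulmxA IH Mevec.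
Qed.

Lemma col_evec (j : 'I_n) (A : 'M[int]_n) : col j A = A *m evec n j.+1.
Proof.
rewrite colE; congr (_ *m _); apply/matrixP => i k; rewrite !mxE eqSS.
by rewrite (ord1 k) eqxx andbT.
Qed.

Lemma entry_col (A : 'M[int]_n) i j : A i j = (A *m evec n j.+1) i 0.
Proof. by rewrite -col_evec mxE. Qed.

Lemma Mpow_entry k i j : (M ^+ k) i j = (i.+1 == iter k f j.+1)%:R.
Proof. by rewrite entry_col Mpow_evec mxE. Qed.

Lemma Emat_entry a b i j : Emat n a b i j = (i.+1 == a)%:R * (j.+1 == b)%:R.
Proof. by rewrite /Emat !mxE big_ord1 !mxE. Qed.

Lemma Mpow_hm : M ^+ hm = 0.
Proof.
apply/matrixP => i j; rewrite Mpow_entry mxE iter_ge //; first exact: Dn.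
exact: hm_ge.
Qed.

Lemma Mpow_ne : M ^+ hm.-1 != 0.
Proof.
case: hm_ex => x hx.
have : (1 <= iter hm.-1 f x.+1 <= n)%N.
  rewrite iter_nz ?hx; last exact: Dn.
  by case/andP: hm_bounds; case: hm.
move=> H.
have lt : ((iter hm.-1 f x.+1).-1 < n)%N by move: H; lia.
apply/negP => /eqP A0.
have := Mpow_entry hm.-1 (Ordinal lt) x; rewrite A0 mxE /=.
have -> : (iter hm.-1 f x.+1).-1.+1 = iter hm.-1 f x.+1 by move: H; lia.
by rewrite eqxx.
Qed.

Lemma part2a k : M ^+ k =
  \sum_(x < n | (1 <= iter k f x.+1 <= n)%N) Emat n (iter k f x.+1) x.+1.
Proof.
apply/matrixP => i j; rewrite summxE Mpow_entry.
case Pj: (1 <= iter k f j.+1 <= n)%N.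
  rewrite (bigD1 j) //= Emat_entry eqxx mulr1 big1 ?addr0 // => x /andP[_ xj].
  rewrite Emat_entry eqSS; case: (@eqP nat j x) => [e|_]; last by rewrite mulr0.
  by move: xj; rewrite (val_inj e) eqxx.
rewrite big1; last first.
  move=> x Px; rewrite Emat_entry eqSS; case: (@eqP nat j x) => [e|_]; last by rewrite mulr0.
  by move: Px; rewrite -(val_inj e) Pj.
have -> : iter k f j.+1 = 0%N by move: Pj (iterle k _ (ltn_ord j)); lia.
by [].
Qed.

Lemma nnz_sum (A : 'M[int]_n) : nnz A = (\sum_(j < n) \sum_(i < n) (A i j != 0))%N.
Proof.
rewrite /nnz -sum1_card big_mkcond /= exchange_big pair_bigA /=.
by apply: eq_bigr => ij _; rewrite inE; case: (_ != _).
Qed.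

Lemma part2b k : nnz (M ^+ k) = (n - \sum_(1 <= nu < k.+1) pcount n phi nu)%N.
Proof.
rewrite nnz_sum.
transitivity (\sum_(j < n) (k < h j.+1))%N.
  apply: eq_bigr => j _.
  rewrite (eq_bigr (fun i : 'I_n => nat_of_bool (i.+1 == iter k f j.+1))); last first.
    by move=> i _; rewrite Mpow_entry pnatr_eq0; case: (i.+1 == iter k f j.+1).
  by rewrite count_eq iter_nz //; exact: Dn.
rewrite (eq_bigr (fun nu => 1 * pcount n phi nu)%N); last by move=> *; rewrite mul1n.
rewrite sum_weighted.
have E : (\sum_(x<n) (k < h x.+1) + \sum_(x<n) ((0 < h x.+1 < k.+1) * 1) = n)%N.
  rewrite -big_split /= -[RHS]card_ord -sum1_card; apply: eq_bigr => x _.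
  rewrite muln1 ltnS; by case: leqP.
lia.
Qed.

Definition Nm := \sum_(k < hm) M ^+ k.

Lemma MhatN : Mhat n phi *m Nm = 1%:M.
Proof.
rewrite /Mhat mulmxE idmxE.
have := subrX1 M hm; rewrite Mpow_hm sub0r => H.
by rewrite -opprB mulNr -H opprK.
Qed.

Lemma Mhat_unit : Mhat n phi \in unitmx.
Proof. by have [U _] := mulmx1_unit MhatN. Qed.

Lemma invN : invmx (Mhat n phi) = Nm.
Proof. by rewrite -[LHS]mulmx1 -MhatN mulmxA mulVmx ?Mhat_unit // mul1mx. Qed.

Lemma colN (j : 'I_n) : col j Nm = \sum_(0 <= k < h j.+1) evec n (iter k f j.+1).
Proof.
rewrite col_evec /Nm mulmx_suml.
under eq_bigr do rewrite Mpow_evec.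
rewrite -(big_mkord xpredT (fun k => evec n (iter k f j.+1))).
rewrite (@big_cat_nat _ _ _ (h j.+1)) //=; last exact: hm_ge.
rewrite [X in _ + X](_ : _ = 0) ?addr0 //.
rewrite big_nat_cond big1 // => k /andP[/andP[hk _] _].
by rewrite iter_ge ?evec0 //; exact: Dn.
Qed.

Lemma colInv (j : 'I_n) : col j (invmx (Mhat n phi)) =
  evec n j.+1 + \sum_(1 <= nu < h j.+1) evec n (iter nu f j.+1).
Proof. by rewrite invN colN big_ltn. Qed.

Lemma nnzN : nnz (invmx (Mhat n phi)) = (\sum_(x < n) h x.+1)%N.
Proof.
rewrite invN nnz_sum; apply: eq_bigr => j _.
set s := map (fun k => iter k f j.+1) (iota 0 (h j.+1)).
have us : uniq s.
  rewrite map_inj_in_uniq ?iota_uniq // => a b; rewrite !mem_iota /= !add0n => ah bh E.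
  have [H _] := hspec _ (Dn j).
  case: (ltngtP a b) => // ab.
    by move: (norep _ _ _ (Dn j) ab E) (H a); rewrite ah => -> .
  by move: (norep _ _ _ (Dn j) ab (esym E)) (H b); rewrite bh => -> .
have As : all (fun c => 1 <= c <= n)%N s.
  apply/allP => c /mapP[k]; rewrite mem_iota /= add0n => kh ->.
  by rewrite iter_nz //; exact: Dn.
transitivity (size s); last by rewrite size_map size_iota.
rewrite -(sum_mem _ _ us As).
apply: eq_bigr => i _.
rewrite entry_col -col_evec colN summxE.
under eq_bigr do rewrite evec_entry.
rewrite -natr_sum pnatr_eq0 sum_count_mem /index_iota subn0 -/s count_uniq_mem //.
by case: (_ \in _).
Qed.

Lemma main :
  let p := pcount n phi in
  let m := mmax n phi in
  let h := height n phi in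
  let f := phin n phi in
  [/\ [/\ (\sum_(1 <= nu < m.+1) p nu)%N = n,
          (1 <= m <= n)%N &
          (forall nu : nat, (1 <= nu <= m)%N -> (1 <= p nu)%N)],
      nilpotent_deg (Mphi n phi) m,
      (forall k : nat, (1 <= k <= m)%N ->
         Mphi n phi ^+ k =
           \sum_(x < n | (1 <= iter k f x.+1 <= n)%N) Emat n (iter k f x.+1) x.+1
         /\ nnz (Mphi n phi ^+ k) = (n - \sum_(1 <= nu < k.+1) p nu)%N) &
      [/\ Mhat n phi \in unitmx,
          (forall j : 'I_n,
             col j (invmx (Mhat n phi)) =
               evec n j.+1 + \sum_(1 <= nu < h j.+1) evec n (iter nu f j.+1)),
          nnz (invmx (Mhat n phi)) = (\sum_(x < n) h x.+1)%N,
          (\sum_(x < n) h x.+1)%N = (\sum_(1 <= nu < m.+1) nu * p nu)%N &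
          ((\sum_(1 <= nu < m.+1) nu * p nu) <= n * m - 'C(m, 2))%N]].
Proof.
move=> p m hh ff; rewrite /p /m /hh /ff mmax_eq.
split.
- split; [exact: comp_sum | exact: hm_bounds |].
  move=> nu /pos [x hx]; rewrite pcount_gt0; apply/existsP; exists x; by rewrite hx.
- split; [exact: Mpow_hm | exact: Mpow_ne].
- move=> k _; split; [exact: part2a | exact: part2b].
- split; [exact: Mhat_unit | exact: colInv | exact: nnzN | exact: hsum | exact: ineq].
Qed.

End S.

Theorem theorem1p7 (phi : nat -> nat) (n : nat)
  (phi0 : phi 0%N = 0%N)
  (phi_nofix : forall x : nat, (0 < x)%N -> phi x <> x)
  (hn : (2 <= n)%N)
  (hnc : no_cycle n phi) :
  let p := pcount n phi in
  let m := mmax n phi in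
  let h := height n phi in
  let f := phin n phi in
  (* pi = (p_1,...,p_m) is a composition of n of length m *)
  [/\ [/\ (\sum_(1 <= nu < m.+1) p nu)%N = n,
          (1 <= m <= n)%N &
          (forall nu : nat, (1 <= nu <= m)%N -> (1 <= p nu)%N)],
  (* (1) *)
      nilpotent_deg (Mphi n phi) m,
  (* (2) *)
      (forall k : nat, (1 <= k <= m)%N ->
         Mphi n phi ^+ k =
           \sum_(x < n | (1 <= iter k f x.+1 <= n)%N) Emat n (iter k f x.+1) x.+1
         /\ nnz (Mphi n phi ^+ k) = (n - \sum_(1 <= nu < k.+1) p nu)%N) &
  (* (3) *)
      [/\ Mhat n phi \in unitmx,
          (forall j : 'I_n,
             col j (invmx (Mhat n phi)) =
               evec n j.+1 + \sum_(1 <= nu < h j.+1) evec n (iter nu f j.+1)),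
          nnz (invmx (Mhat n phi)) = (\sum_(x < n) h x.+1)%N,
          (\sum_(x < n) h x.+1)%N = (\sum_(1 <= nu < m.+1) nu * p nu)%N &
          ((\sum_(1 <= nu < m.+1) nu * p nu) <= n * m - 'C(m, 2))%N]].
Proof. by apply: main. Qed.
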